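(* If $n$ is divisible by $8$, then $\hat r_n\le\frac85$.
   Context: Equal responsibilities; chores $e_1,e_2,\ldots,e_m$. A picking order $S\in[n]^m$ allocates $A_i(S)=\{e_r:S_r=i\}$ to agent $i$. For additive $c_i\ge0$ with $c_i(e_1)\ge c_i(e_2)\ge\cdots$, $CS_i=\max\{\frac1nc_i(\{e_1,\ldots,e_m\}),c_i(e_1),c_i(e_n)+c_i(e_{n+1})\}$ (zeros beyond $m$). $r_{n,m}(S)=\sup_i\sup_{c_i}c_i(A_i(S))/CS_i$. A ridge picking order has $m\ge2n$, $S_r=r$ and $S_{n+r}=n-r+1$ for $1\le r\le n$. $\hat r_{n,m}=\min\{r_{n,m}(S):S\text{ ridge of length }m\}$, $\hat r_n=\sup_{m\ge 2n}\hat r_{n,m}$. *)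

(* Defs.v *)
From HB Require Import structures.
From mathcomp Require Import all_boot all_order all_algebra.
From mathcomp Require Import reals.
Set Implicit Arguments. Unset Strict Implicit. Unset Printing Implicit Defensive.
Import Order.TTheory GRing.Theory Num.Theory.
Local Open Scope ring_scope.

(* Conventions: agents are 1..n, chores/positions are 1..m (1-based, as in
   the paper).  A picking order S : [n]^m is a function nat -> nat whose
   values on positions 1..m lie in 1..n (values elsewhere are irrelevant). *)
Definition picking_order (n m : nat) (S : nat -> nat) : Prop :=
  forall r, (1 <= r <= m)%N -> (1 <= S r <= n)%N.

Definition ridge (n m : nat) (S : nat -> nat) : Prop :=
  [/\ picking_order n m S, (2 * n <= m)%N &
      forall r, (1 <= r <= n)%N -> S r = r /\ S (n + r)%N = (n - r + 1)%N].

(* An additive cost function, given by its values c(e_r), r = 1..m: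
   nonnegative and ordered c(e_1) >= c(e_2) >= ... >= c(e_m). *)
Definition cost_fn (R : realType) (m : nat) (c : nat -> R) : Prop :=
  (forall r, (1 <= r <= m)%N -> 0 <= c r) /\
  (forall r s, (1 <= r)%N -> (r <= s)%N -> (s <= m)%N -> c s <= c r).

Definition cz (R : realType) (m : nat) (c : nat -> R) (k : nat) : R :=
  if (1 <= k <= m)%N then c k else 0.

Definition bundle_cost (R : realType) (m : nat) (S : nat -> nat) (c : nat -> R)
  (i : nat) : R :=
  \sum_(1 <= r < m.+1 | S r == i) c r.

Definition CS (R : realType) (n m : nat) (c : nat -> R) : R :=
  Num.max (Num.max (n%:R^-1 * \sum_(1 <= r < m.+1) c r) (cz m c 1))
          (cz m c n + cz m c n.+1).

(* r_{n,m}(S) <= x : for every agent i and every admissible cost c_i,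
   c_i(A_i(S)) <= x * CS_i  (i.e. every ratio c_i(A_i(S))/CS_i is <= x;
   the inequality form also handles the all-zero cost, where CS_i = 0). *)
Definition ratio_le (R : realType) (n m : nat) (S : nat -> nat) (x : R) : Prop :=
  forall i, (1 <= i <= n)%N ->
  forall c : nat -> R, cost_fn m c -> bundle_cost m S c i <= x * CS n m c.

(* \hat r_{n,m} <= x : the minimum over (the finitely many) ridge orders of
   length m of r_{n,m}(S) is <= x, i.e. some ridge order S has r_{n,m}(S) <= x. *)
Definition hat_r_nm_le (R : realType) (n m : nat) (x : R) : Prop :=
  exists S, ridge n m S /\ ratio_le n m S x.

Definition hat_r_n_le (R : realType) (n : nat) (x : R) : Prop :=
  forall m, (2 * n <= m)%N -> hat_r_nm_le n m x.

(* Main.v *)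
Require Import Defs.
From HB Require Import structures.
From mathcomp Require Import all_boot all_order all_algebra.
From mathcomp Require Import reals.
From mathcomp Require Import zify ring lra.
Import Order.TTheory GRing.Theory Num.Theory.
Local Open Scope ring_scope.
Local Close Scope ring_scope.

Definition patl := [:: 5;6;7;4;5;3;2;6;7;4;5;1;0;7;6;5;3;4;2;5;7;6;4;1;0;5;3;2;6;7;4;5;7;6;5;3;4;2;1;0]%N.
Definition pat (b : nat) : nat := nth 0%N patl (b %% 40).
Definition Al (j : nat) : nat := nth 0%N [:: 40;37;32;28;16;0;4;0]%N j.
Definition El (j : nat) : nat := nth 0%N [:: 0;3;0;4;0;0;12;16]%N j.
Definition Cl (j : nat) : nat := nth 0%N [:: 3;3;4;4;6;8;6;6]%N j.
Definition cnt (j B : nat) : nat := count (fun b => pat b == j) (iota 0 B).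

Lemma table j : (j < 8)%N ->
  [/\ (40 <= Al j + Cl j * j)%N, (80 <= Al j + Cl j * (15 - j) + 2 * El j)%N,
      (Al j + 8 * Cl j + El j = 64)%N & cnt j 40 = Cl j].
Proof. by case: j => [|[|[|[|[|[|[|[|]]]]]]]]. Qed.

Lemma pat_lt b : (pat b < 8)%N.
Proof.
rewrite /pat; have : (b %% 40 < 40)%N by rewrite ltn_mod.
move: (b %% 40) => x; do 40! (case: x => [//|x]). by [].
Qed.

Lemma finite_check : all (fun j => all (fun B => 40 * (2 + cnt j B.+1) <= Al j + 2 * El j + Cl j * (16 + B))%N (iota 0 40)) (iota 0 8).
Proof. by vm_compute. Qed.

Lemma cnt_per j B : cnt j (40 + B) = (cnt j 40 + cnt j B)%N.
Proof.
rewrite /cnt iotaD count_cat add0n; congr (_ + _)%N.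
rewrite (iotaDl 40 0) count_map; apply: eq_count => x /=.
by rewrite /pat modnDl.
Qed.

Lemma key j B : (j < 8)%N -> (40 * (2 + cnt j B.+1) <= Al j + 2 * El j + Cl j * (16 + B))%N.
Proof.
move=> hj; elim/ltn_ind: B => B IH.
case: (ltnP B 40) => hB.
  have Hj : j \in iota 0 8 by rewrite mem_iota.
  have HB : B \in iota 0 40 by rewrite mem_iota.
  by have /allP := allP finite_check j Hj; apply.
have [_ _ _ hc] := table j hj.
have := IH (B - 40)%N ltac:(lia).
have -> : B.+1 = (40 + (B - 40).+1)%N by lia.
rewrite cnt_per hc.
have -> : (16 + B = 40 + (16 + (B - 40)))%N by lia.
nia.
Qed.
Definition Sx (k p : nat) : nat :=
  if (p <= 8 * k)%N then p
  else if (p <= 16 * k)%N then (16 * k + 1 - p)%N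
  else (pat ((p - 16 * k - 1) %/ k) * k + (p - 16 * k - 1) %% k + 1)%N.

Definition Ncount (k i u : nat) : nat := \sum_(1 <= p < u.+1) (Sx k p == i).
Definition Tc (k i Q : nat) : nat := \sum_(0 <= q < Q) (Sx k (16 * k + 1 + q) == i).

Lemma N_front k i u : (0 < k)%N -> (1 <= i <= 8 * k)%N -> (u <= 16 * k)%N ->
  Ncount k i u = ((i <= u) + (16 * k + 1 - i <= u))%N.
Proof.
move=> hk hi; elim: u => [|u IH] hu.
  rewrite /Ncount big_geq //; lia.
rewrite /Ncount big_nat_recr //= -/(Ncount k i u) IH; last lia.
rewrite /Sx; case: ifP => h1.
  case: eqP => h2; lia.
rewrite ifT; last lia.
case: eqP => h2; lia.
Qed.

Lemma Sx_tail k q : (0 < k)%N -> Sx k (16 * k + 1 + q) = (pat (q %/ k) * k + q %% k + 1)%N.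
Proof.
move=> hk; rewrite /Sx ifF; last lia.
rewrite ifF; last lia.
by have -> : (16 * k + 1 + q - 16 * k - 1 = q)%N by lia.
Qed.

Lemma N_tail k i Q : (0 < k)%N -> (1 <= i <= 8 * k)%N ->
  Ncount k i (16 * k + Q) = (2 + Tc k i Q)%N.
Proof.
move=> hk hi; elim: Q => [|Q IH].
  rewrite addn0 N_front //; rewrite /Tc big_geq //; lia.
rewrite addnS /Ncount big_nat_recr //= -/(Ncount k i _) IH /Tc big_nat_recr //=.
have -> : ((16 * k + Q).+1 = 16 * k + 1 + Q)%N by lia.
lia.
Qed.

Lemma tail_eq k j s q : (0 < k)%N -> (1 <= s <= k)%N ->
  (Sx k (16 * k + 1 + q) == j * k + s)%N = (pat (q %/ k) == j) && (q %% k == s - 1)%N.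
Proof.
move=> hk hs; rewrite Sx_tail //.
apply/eqP/andP.
  move=> e.
  have e2 : (pat (q %/ k) * k + q %% k = j * k + (s - 1))%N by lia.
  have hq : (q %% k < k)%N by rewrite ltn_mod.
  have hs' : (s - 1 < k)%N by lia.
  have e3 := congr1 (fun x => x %/ k)%N e2.
  have e4 := congr1 (fun x => x %% k)%N e2.
  move: e3 e4 => /=; rewrite !divnMDl // !modnMDl.
  rewrite (divn_small hq) (divn_small hs') (modn_small hq) (modn_small hs') !addn0 => -> ->; by split.
by case=> /eqP -> /eqP ->; lia.
Qed.

Lemma cntS j B : cnt j B.+1 = (cnt j B + (pat B == j))%N.
Proof. by rewrite /cnt -addn1 iotaD count_cat /= addn0. Qed.

Section Tail.
Variables (k j s : nat).
Hypothesis hk : (0 < k)%N.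
Hypothesis hs : (1 <= s <= k)%N.

Lemma Tstep B r : (r < k)%N ->
  Tc k (j * k + s) (B * k + r).+1 =
  (Tc k (j * k + s) (B * k + r) + ((pat B == j) && (r == s - 1)))%N.
Proof.
move=> hr; rewrite /Tc big_nat_recr //= tail_eq //.
by rewrite divnMDl // divn_small // addn0 modnMDl modn_small.
Qed.

Lemma Tblock B r : (r <= k)%N ->
  Tc k (j * k + s) (B * k + r) = (Tc k (j * k + s) (B * k) + ((pat B == j) && (s <= r)))%N.
Proof.
elim: r => [|r IH] hr.
  rewrite addn0; have -> : (s <= 0)%N = false by lia.
  by rewrite andbF addn0.
rewrite addnS Tstep // IH; last lia.
case: (pat B == j); rewrite /= ?addn0 //.
rewrite -addnA; congr (_ + _)%N.
case: eqP => h2; case: leqP => h3; case: leqP => h4 //=; lia.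
Qed.

Lemma T0 B : Tc k (j * k + s) (B * k) = cnt j B.
Proof.
elim: B => [|B IH]; first by rewrite /Tc big_geq.
have -> : (B.+1 * k = B * k + k)%N by lia.
rewrite Tblock // IH cntS.
have -> : (s <= k)%N by lia.
by rewrite andbT.
Qed.

Lemma Tbound Q : (Tc k (j * k + s) Q <= cnt j (Q %/ k).+1)%N.
Proof.
rewrite {1}(divn_eq Q k) Tblock; last by apply: ltnW; rewrite ltn_mod.
rewrite T0 cntS leq_add2l.
case: (pat (Q %/ k) == j) => //=; exact: leq_b1.
Qed.

End Tail.

Lemma count_bound k i u : (0 < k)%N -> (1 <= i <= 8 * k)%N ->
  (40 * k * Ncount k i u <= k * Al ((i - 1) %/ k) + Cl ((i - 1) %/ k) * u
     + k * El ((i - 1) %/ k) * ((8 * k <= u) + (8 * k + 1 <= u)))%N.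
Proof.
move=> hk hi.
set j := ((i - 1) %/ k)%N.
set s := ((i - 1) %% k + 1)%N.
have hq : (i - 1 = j * k + (i - 1) %% k)%N by rewrite /j {1}(divn_eq (i - 1) k).
have hr : ((i - 1) %% k < k)%N by rewrite ltn_mod.
have hij : (i = j * k + s)%N by rewrite /s; lia.
have hs : (1 <= s <= k)%N by rewrite /s; lia.
have hj : (j < 8)%N by rewrite /j ltn_divLR //; lia.
have [t1 t2 t3 _] := table j hj.
have hK := fun B => key j B hj.
move: (Al j) (El j) (Cl j) t1 t2 t3 hK => A E C t1 t2 t3 hK.
case: (leqP u (16 * k)) => hu.
  rewrite N_front //.
  case: (leqP i u) => h1; last first.
    have -> : (16 * k + 1 - i <= u)%N = false by lia.
    by rewrite muln0.
  case: (leqP (16 * k + 1 - i) u) => h2 /=.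
    have hw : ((8 * k <= u) + (8 * k + 1 <= u) = 2)%N.
      have h8 : (8 * k <= u)%N by lia.
      have h9 : (8 * k + 1 <= u)%N by lia.
      by rewrite h8 h9.
    rewrite hw.
    have hu2 : ((15 - j) * k <= u)%N by nia.
    have := leq_mul (leqnn C) hu2.
    nia.
  have hu2 : (j * k <= u)%N by lia.
  have := leq_mul (leqnn C) hu2.
  nia.
have hw : ((8 * k <= u) + (8 * k + 1 <= u) = 2)%N.
      have h8 : (8 * k <= u)%N by lia.
      have h9 : (8 * k + 1 <= u)%N by lia.
      by rewrite h8 h9.
rewrite hw.
have -> : u = (16 * k + (u - 16 * k))%N by lia.
rewrite N_tail // hij.
set Q := (u - 16 * k)%N.
have hT := Tbound k j s hk hs Q.
have hK' := hK (Q %/ k).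
have hQ := divn_eq Q k.
move: hT hK' hQ; move: (cnt j (Q %/ k).+1) (Q %/ k) (Q %% k) (Tc k (j * k + s) Q) => c B r T hT hK' hQ.
nia.
Qed.
Local Open Scope ring_scope.
Lemma abel (R : realType) m (c f g : nat -> R) :
  (forall r, (1 <= r <= m)%N -> 0 <= c r) ->
  (forall r s, (1 <= r)%N -> (r <= s)%N -> (s <= m)%N -> c s <= c r) ->
  (forall u, (1 <= u <= m)%N -> \sum_(1 <= p < u.+1) f p <= \sum_(1 <= p < u.+1) g p) ->
  \sum_(1 <= p < m.+1) c p * f p <= \sum_(1 <= p < m.+1) c p * g p.
Proof.
move=> c0 cmon hfg.
have H : forall u, (1 <= u <= m)%N ->
   c u * \sum_(1 <= p < u.+1) (g p - f p) <= \sum_(1 <= p < u.+1) c p * (g p - f p).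
  elim=> [|u IH] hu; first by move: hu; rewrite ltnn.
  rewrite big_nat_recr //= [X in _ <= X]big_nat_recr //=.
  case: (posnP u) => [u0|upos].
    by rewrite u0 !big_geq // !add0r.
  have IH' := IH ltac:(lia).
  have D0 : 0 <= \sum_(1 <= p < u.+1) (g p - f p).
    by rewrite sumrB subr_ge0; apply: hfg; lia.
  rewrite mulrDr lerD2r.
  apply: le_trans IH'.
  by apply: ler_wpM2r => //; apply: cmon; lia.
case: (posnP m) => [->|mpos]; first by rewrite !big_geq.
have := H m ltac:(lia).
have D0 : 0 <= \sum_(1 <= p < m.+1) (g p - f p).
  by rewrite sumrB subr_ge0; apply: hfg; lia.
have := mulr_ge0 (c0 m ltac:(lia)) D0.
move=> h1 h2; have := le_trans h1 h2.
have -> : \sum_(1 <= p < m.+1) c p * (g p - f p) =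
   \sum_(1 <= p < m.+1) c p * g p - \sum_(1 <= p < m.+1) c p * f p.
  by rewrite -sumrB; apply: eq_bigr => p _; rewrite mulrBr.
by rewrite subr_ge0.
Qed.

Lemma sum_ind (R : realType) u a (F : nat -> R) :
  \sum_(1 <= p < u.+1) F p * (p == a)%:R = (1 <= a <= u)%N%:R * F a.
Proof.
elim: u => [|u IH]; first by rewrite big_geq // (_ : (1 <= a <= 0)%N = false) ?mul0r //; lia.
rewrite big_nat_recr //= IH.
case: (eqVneq u.+1 a) => [<-|ne].
  rewrite (_ : (1 <= u.+1 <= u)%N = false); last lia.
  rewrite (_ : (1 <= u.+1 <= u.+1)%N = true); last lia.
  by rewrite mul0r add0r mulr1 mul1r.
rewrite mulr0 addr0.
by rewrite (_ : (1 <= a <= u.+1)%N = (1 <= a <= u)%N) //; apply/idP/idP; move: ne => /eqP; lia.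
Qed.

Definition gfun (R : realType) (n k A C E : nat) (p : nat) : R :=
  A%:R / 40 * (p == 1)%N%:R + C%:R / (40 * k%:R) + E%:R / 40 * (p == n)%:R
  + E%:R / 40 * (p == n.+1)%:R.

Lemma sum_cg (R : realType) u (c : nat -> R) n k A C E :
  \sum_(1 <= p < u.+1) c p * gfun R n k A C E p =
  A%:R / 40 * ((1 <= 1 <= u)%N%:R * c 1%N) + C%:R / (40 * k%:R) * \sum_(1 <= p < u.+1) c p
  + E%:R / 40 * ((1 <= n <= u)%N%:R * c n) + E%:R / 40 * ((1 <= n.+1 <= u)%N%:R * c n.+1).
Proof.
rewrite (eq_bigr (fun p => A%:R / 40 * (c p * (p == 1)%N%:R) + C%:R / (40 * k%:R) * c p
   + E%:R / 40 * (c p * (p == n)%:R) + E%:R / 40 * (c p * (p == n.+1)%:R))); last first.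
  by move=> p _; rewrite /gfun; ring.
by rewrite !big_split /= -!mulr_sumr !sum_ind.
Qed.

Theorem lemma6 (R : realType) (n : nat) :
  (0 < n)%N -> (8 %| n)%N -> hat_r_n_le n (8 / 5 : R).
Proof.
move=> hn h8 m hm.
set k := (n %/ 8)%N.
have hnk : n = (8 * k)%N by rewrite /k mulnC divnK.
have hk : (0 < k)%N by lia.
exists (Sx k); split.
  split => //.
    move=> r hr; rewrite /Sx.
    case: ifP => h1; first lia.
    case: ifP => h2; first lia.
    have := pat_lt ((r - 16 * k - 1) %/ k)%N.
    have : ((r - 16 * k - 1) %% k < k)%N by rewrite ltn_mod.
    move: (pat _) ((r - 16 * k - 1) %% k)%N => a b hb ha.
    nia.
  move=> r hr; rewrite /Sx; split.
    by rewrite ifT //; lia.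
  rewrite ifF; last lia.
  rewrite ifT; last lia.
  lia.
move=> i hi c [c0 cmon].
rewrite /bundle_cost big_mkcond /=.
rewrite (eq_bigr (fun p => c p * (Sx k p == i)%:R)); last first.
  by move=> p _; case: eqP => _; rewrite ?mulr1 ?mulr0.
set j := ((i - 1) %/ k)%N.
have hj : (j < 8)%N by rewrite /j ltn_divLR //; lia.
apply: le_trans (@abel R m c _ (gfun R n k (Al j) (Cl j) (El j)) c0 cmon _) _.
  move=> u hu.
  rewrite -natr_sum -/(Ncount k i u).
  rewrite (eq_bigr (fun p => 1 * gfun R n k (Al j) (Cl j) (El j) p)); last by move=> p _; rewrite mul1r.
  rewrite sum_cg sumr_const_nat subn1 /= !mulr1.
  have hb := count_bound k i u hk (ltac:(lia) : (1 <= i <= 8 * k)%N).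
  rewrite -/j -hnk in hb.
  have hb' : ((40 * k * Ncount k i u)%N%:R <=
     (k * Al j + Cl j * u + k * El j * ((n <= u) + (n + 1 <= u)))%N%:R :> R).
    by rewrite ler_nat.
  rewrite (_ : (0 < u)%N = true); last lia.
  rewrite (_ : (0 < n <= u)%N = (n <= u)%N); last lia.
  rewrite (_ : (n < u)%N = (n + 1 <= u)%N); last lia.
  move: hb'; rewrite !natrD !natrM.
  have kpos : (0 : R) < k%:R by rewrite ltr0n.
  move: (Ncount k i u) (Al j) (Cl j) (El j) (n <= u)%N (n + 1 <= u)%N => N A C E b1 b2 hb'.
  rewrite -(ler_pM2l (_ : (0 : R) < 40 * k%:R)); last by rewrite mulr_gt0.
  apply: (le_trans hb'); rewrite le_eqVlt; apply/orP; left; apply/eqP.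
  rewrite natrD (_ : (true : nat)%:R = 1 :> R) //.
  have kne : (k%:R : R) != 0 by rewrite pnatr_eq0 -lt0n.
  field; rewrite ?mulf_neq0 //.
rewrite sum_cg.
rewrite (_ : (0 < m)%N = true); last lia.
rewrite (_ : (0 < n <= m)%N = true); last lia.
rewrite (_ : (n < m)%N = true); last lia.
rewrite !mul1r /CS /cz.
rewrite (_ : (0 < 1 <= m)%N = true); last lia.
rewrite (_ : (0 < n <= m)%N = true); last lia.
rewrite (_ : (0 < n.+1 <= m)%N = true); last lia.
set T := \sum_(1 <= r < m.+1) c r.
set M := Num.max _ _.
have m1 : n%:R^-1 * T <= M by rewrite /M !le_max lexx.
have m2 : c 1%N <= M by rewrite /M !le_max lexx orbT.
have m3 : c n + c n.+1 <= M by rewrite /M !le_max lexx orbT.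
have [_ _ t3 _] := table j hj.
move: (Al j) (Cl j) (El j) t3 => A C E t3.
have e2 : C%:R / (40 * k%:R) * T = (8 * C%:R / 40) * (n%:R^-1 * T) :> R.
  have kne : (k%:R : R) != 0 by rewrite pnatr_eq0 -lt0n.
  rewrite hnk natrM; field; rewrite ?mulf_neq0 //.
rewrite e2.
have t3' : A%:R + 8 * C%:R + E%:R = 64 :> R.
  by rewrite -[8 : R]/(8%N%:R) -natrM -!natrD t3.
have A0 : (0 : R) <= A%:R by rewrite ler0n.
have C0 : (0 : R) <= C%:R by rewrite ler0n.
have E0 : (0 : R) <= E%:R by rewrite ler0n.
have f1 : A%:R / 40 * c 1%N <= A%:R / 40 * M by apply: ler_wpM2l => //; lra.
have f2 : 8 * C%:R / 40 * (n%:R^-1 * T) <= 8 * C%:R / 40 * M by apply: ler_wpM2l => //; lra.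
have f3 : E%:R / 40 * (c n + c n.+1) <= E%:R / 40 * M by apply: ler_wpM2l => //; lra.
have -> : 8 / 5 * M = A%:R / 40 * M + 8 * C%:R / 40 * M + E%:R / 40 * M :> R.
  have -> : A%:R / 40 * M + 8 * C%:R / 40 * M + E%:R / 40 * M = (A%:R + 8 * C%:R + E%:R) / 40 * M :> R by ring.
  by rewrite t3'; field.
move: f1 f2 f3; rewrite mulrDr; lra.
Qed.
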